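(* Let $\mu,\nu\in\Sigma$ be restricted roots such that $\mu+\nu\in\Sigma$. Then the bilinear pairing $\mathfrak g_\mu\times\mathfrak g_\nu\to\mathfrak g_{\mu+\nu}$, $(X,Y)\mapsto[X,Y]$, is nondegenerate: for every nonzero $X\in\mathfrak g_\mu$ there is $Y\in\mathfrak g_\nu$ with $[X,Y]\ne0$, and for every nonzero $Y\in\mathfrak g_\nu$ there is $X\in\mathfrak g_\mu$ with $[X,Y]\neq0$.
   Context: $\mathfrak g$ is the Lie algebra of the isometry group of a Riemannian symmetric space of noncompact type, $\mathfrak g=\mathfrak k\oplus\mathfrak p$ a Cartan decomposition, $\mathfrak a\subseteq\mathfrak p$ maximal abelian, $\Sigma\subset\mathfrak a^*$ the restricted root system and $\mathfrak g_\mu=\{X\in\mathfrak g:[H,X]=\mu(H)X\ \forall H\in\mathfrak a\}$ the restricted root spaces. *)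

(* Defs.v *)
From HB Require Import structures.
From mathcomp Require Import all_boot all_order all_algebra.
From mathcomp Require Import reals.
Set Implicit Arguments.
Unset Strict Implicit.
Unset Printing Implicit Defensive.
Import Order.TTheory GRing.Theory Num.Theory.
Local Open Scope ring_scope.

(* A finite-dimensional real Lie algebra g is modelled as 'rV[R]_n with a
   bracket br.  Subspaces of g are row spaces of matrices (mxalgebra, %MS). *)

Section LieDefs.
Variables (R : realType) (n : nat).
Implicit Types (X Y Z H : 'rV[R]_n) (A B I : 'M[R]_n).
Variable br : 'rV[R]_n -> 'rV[R]_n -> 'rV[R]_n.

Definition is_lie_bracket :=
  [/\ forall (a : R) X Y Z, br (a *: X + Y) Z = a *: br X Z + br Y Z,
      forall (a : R) X Y Z, br Z (a *: X + Y) = a *: br Z X + br Z Y,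
      forall X, br X X = 0 &
      forall X Y Z, br X (br Y Z) + br Y (br Z X) + br Z (br X Y) = 0].

Definition ad X : 'M[R]_n := lin1_mx (br X).
Definition killing X Y : R := \tr (ad X *m ad Y).

(* semisimple: nondegenerate Killing form (Cartan's criterion) *)
Definition semisimple := forall X, (forall Y, killing X Y = 0) -> X = 0.

Definition cartan_involution (theta : 'rV[R]_n -> 'rV[R]_n) :=
  [/\ forall (a : R) X Y, theta (a *: X + Y) = a *: theta X + theta Y,
      forall X, theta (theta X) = X,
      forall X Y, theta (br X Y) = br (theta X) (theta Y) &
      forall X, X != 0 -> 0 < - killing X (theta X)].

Definition is_ideal I := forall X Y, (X <= I)%MS -> (br Y X <= I)%MS.

(* effectivity: k = Fix(theta) contains no nonzero ideal of g
   (g is the Lie algebra of the isometry group, which acts effectively) *)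
Definition effective (theta : 'rV[R]_n -> 'rV[R]_n) :=
  forall I, is_ideal I -> (forall X, (X <= I)%MS -> theta X = X) ->
    forall X, (X <= I)%MS -> X = 0.

Definition sub_p (theta : 'rV[R]_n -> 'rV[R]_n) A :=
  forall H, (H <= A)%MS -> theta H = - H.

Definition abelian_sub A :=
  forall H H', (H <= A)%MS -> (H' <= A)%MS -> br H H' = 0.

Definition max_abelian_in_p (theta : 'rV[R]_n -> 'rV[R]_n) A :=
  [/\ sub_p theta A, abelian_sub A &
      forall B, (A <= B)%MS -> sub_p theta B -> abelian_sub B -> (B <= A)%MS].

(* a linear form mu on g (column vector); only its restriction to a matters *)
Definition form_eval (mu : 'cV[R]_n) H : R := (H *m mu) 0 0.

Definition root_space A (mu : 'cV[R]_n) X :=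
  forall H, (H <= A)%MS -> br H X = form_eval mu H *: X.

Definition restricted_root A (mu : 'cV[R]_n) :=
  (exists H, (H <= A)%MS /\ form_eval mu H != 0) /\
  (exists X, X != 0 /\ root_space A mu X).

End LieDefs.

(* Main.v *)
Require Import Defs.
From HB Require Import structures.
From mathcomp Require Import all_boot all_order all_algebra.
From mathcomp Require Import reals.
From mathcomp Require Import lra.
From Stdlib Require Import Classical_Prop.
Import Order.TTheory GRing.Theory Num.Theory.
Local Open Scope ring_scope.

Lemma lin1P (R : realType) n (f : 'rV[R]_n -> 'rV[R]_n)
  (hf : forall a x y, f (a*:x+y) = a*:f x + f y) u : u *m lin1_mx f = f u.
Proof.
have f0 : f 0 = 0.
  have := hf 1 0 0; rewrite !scale1r addr0 => h.
  by apply: (@addrI _ (f 0)); rewrite -h addr0.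
rewrite mulmx_sum_row {2}[u]matrix_sum_delta big_ord1.
elim/big_rec2: _ => [|i y1 y2 _ ->]; first by rewrite f0.
rewrite hf; congr (_ *: _ + _); apply/rowP => j; rewrite !mxE.
by [].
Qed.

Section Lie.
Variables (R : realType) (n : nat).
Variable br : 'rV[R]_n -> 'rV[R]_n -> 'rV[R]_n.
Variable theta : 'rV[R]_n -> 'rV[R]_n.
Hypothesis Hbr : is_lie_bracket br.
Hypothesis Hth : cartan_involution br theta.

Implicit Types (X Y Z U V H : 'rV[R]_n).

Lemma brL a X Y Z : br (a *: X + Y) Z = a *: br X Z + br Y Z.
Proof. by case: Hbr. Qed.
Lemma brR a X Y Z : br Z (a *: X + Y) = a *: br Z X + br Z Y.
Proof. by case: Hbr. Qed.
Lemma brxx X : br X X = 0. Proof. by case: Hbr. Qed.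
Lemma brJ X Y Z : br X (br Y Z) + br Y (br Z X) + br Z (br X Y) = 0.
Proof. by case: Hbr. Qed.

Lemma br0l Z : br 0 Z = 0.
Proof.
have := brL 1 0 0 Z; rewrite !scale1r addr0 => h.
by apply: (@addrI _ (br 0 Z)); rewrite -h addr0.
Qed.
Lemma br0r Z : br Z 0 = 0.
Proof.
have := brR 1 0 0 Z; rewrite !scale1r addr0 => h.
by apply: (@addrI _ (br Z 0)); rewrite -h addr0.
Qed.
Lemma brDl X Y Z : br (X + Y) Z = br X Z + br Y Z.
Proof. by have := brL 1 X Y Z; rewrite !scale1r. Qed.
Lemma brDr X Y Z : br Z (X + Y) = br Z X + br Z Y.
Proof. by have := brR 1 X Y Z; rewrite !scale1r. Qed.
Lemma brZl a X Z : br (a *: X) Z = a *: br X Z.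
Proof. by have := brL a X 0 Z; rewrite !addr0 br0l addr0. Qed.
Lemma brZr a X Z : br Z (a *: X) = a *: br Z X.
Proof. by have := brR a X 0 Z; rewrite !addr0 br0r addr0. Qed.
Lemma brNl X Z : br (- X) Z = - br X Z.
Proof. by rewrite -scaleN1r brZl scaleN1r. Qed.
Lemma brNr X Z : br Z (- X) = - br Z X.
Proof. by rewrite -scaleN1r brZr scaleN1r. Qed.
Lemma brC X Y : br X Y = - br Y X.
Proof.
have := brxx (X + Y); rewrite brDl !brDr !brxx add0r addr0 => /eqP.
by rewrite addr_eq0 => /eqP.
Qed.
Lemma jac X Y Z : br X (br Y Z) = br (br X Y) Z + br Y (br X Z).
Proof.
have h := brJ X Y Z; rewrite [br Z X]brC brNr [br Z (br X Y)]brC in h.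
apply/eqP; rewrite -subr_eq0 -h; apply/eqP.
by rewrite opprD addrA addrAC.
Qed.

Lemma thL a X Y : theta (a *: X + Y) = a *: theta X + theta Y.
Proof. by case: Hth. Qed.
Lemma thK X : theta (theta X) = X. Proof. by case: Hth. Qed.
Lemma thbr X Y : theta (br X Y) = br (theta X) (theta Y). Proof. by case: Hth. Qed.
Lemma thpos X : X != 0 -> 0 < - killing br X (theta X). Proof. by case: Hth => _ _ _; apply. Qed.
Lemma th0 : theta 0 = 0.
Proof.
have := thL 1 0 0; rewrite !scale1r addr0 => h.
by apply: (@addrI _ (theta 0)); rewrite -h addr0.
Qed.
Lemma thZ a X : theta (a *: X) = a *: theta X.
Proof. by have := thL a X 0; rewrite !addr0 th0 addr0. Qed.
Lemma thD X Y : theta (X + Y) = theta X + theta Y.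
Proof. by have := thL 1 X Y; rewrite !scale1r. Qed.
Lemma thN X : theta (- X) = - theta X.
Proof. by rewrite -scaleN1r thZ scaleN1r. Qed.

Lemma adE X v : v *m ad br X = br X v.
Proof. by rewrite lin1P // => a x y; rewrite brR. Qed.
Definition T := lin1_mx theta.
Lemma TE v : v *m T = theta v.
Proof. by rewrite lin1P //; exact: thL. Qed.

Lemma mxrowE (M N : 'M[R]_n) : (forall v : 'rV[R]_n, v *m M = v *m N) -> M = N.
Proof. by move=> h; apply/row_matrixP => i; rewrite !rowE h. Qed.

Lemma adbr Z U : ad br (br Z U) = ad br U *m ad br Z - ad br Z *m ad br U.
Proof.
apply: mxrowE => v; rewrite mulmxBr !mulmxA !adE jac.
by rewrite addrK.
Qed.
Lemma adth U : ad br (theta U) = T *m ad br U *m T.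
Proof. by apply: mxrowE => v; rewrite !mulmxA TE !adE TE thbr thK. Qed.
Lemma TT : T *m T = 1%:M.
Proof. by apply: mxrowE => v; rewrite mulmxA !TE thK mulmx1. Qed.
Lemma adL a X Y : ad br (a *: X + Y) = a *: ad br X + ad br Y.
Proof. by apply: mxrowE => v; rewrite mulmxDr -scalemxAr !adE brL. Qed.

Lemma killC X Y : killing br X Y = killing br Y X.
Proof. exact: mxtrace_mulC. Qed.
Lemma killL a X Y Z : killing br (a *: X + Y) Z = a * killing br X Z + killing br Y Z.
Proof. by rewrite /killing adL mulmxDl -scalemxAl mxtraceD mxtraceZ. Qed.
Lemma kill_inv Z U V : killing br (br Z U) V = - killing br U (br Z V).
Proof.
rewrite /killing !adbr mulmxBl mulmxBr !mxtraceD !raddfN /=.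
rewrite -!mulmxA [\tr (ad br Z *m _)]mxtrace_mulC -!mulmxA.
by rewrite opprB.
Qed.
Lemma kill_th X Y : killing br (theta X) (theta Y) = killing br X Y.
Proof.
rewrite /killing !adth !mulmxA -[_ *m T *m T]mulmxA TT mulmx1.
by rewrite mxtrace_mulC !mulmxA TT mul1mx.
Qed.


Definition ip X Y := - killing br X (theta Y).

Lemma ipL a X Y Z : ip (a *: X + Y) Z = a * ip X Z + ip Y Z.
Proof. by rewrite /ip killL opprD mulrN. Qed.
Lemma ipC X Y : ip X Y = ip Y X.
Proof. by rewrite /ip -kill_th thK killC. Qed.
Lemma ipR a X Y Z : ip Z (a *: X + Y) = a * ip Z X + ip Z Y.
Proof. by rewrite ipC ipL ![ip _ Z]ipC. Qed.
Lemma ip0l Y : ip 0 Y = 0.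
Proof.
have := ipL 1 0 0 Y; rewrite !scale1r addr0 mul1r => h.
by apply: (@addrI _ (ip 0 Y)); rewrite -h addr0.
Qed.
Lemma ip0r Y : ip Y 0 = 0.
Proof. by rewrite ipC ip0l. Qed.
Lemma ipZl a X Y : ip (a *: X) Y = a * ip X Y.
Proof. by have := ipL a X 0 Y; rewrite addr0 ip0l addr0. Qed.
Lemma ipZr a X Y : ip Y (a *: X) = a * ip Y X.
Proof. by rewrite ipC ipZl ipC. Qed.
Lemma ipNr X Y : ip Y (- X) = - ip Y X.
Proof. by rewrite -scaleN1r ipZr mulN1r. Qed.
Lemma ip_adj Z U V : ip (br Z U) V = - ip U (br (theta Z) V).
Proof. by rewrite /ip kill_inv thbr thK opprK. Qed.
Lemma ip_pos X : X != 0 -> 0 < ip X X.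
Proof. exact: thpos. Qed.
Lemma ip_ge0 X : 0 <= ip X X.
Proof.
have [->|nz] := eqVneq X 0; first by rewrite ip0l.
by apply/ltW/ip_pos.
Qed.
Lemma ip_eq0 X : ip X X = 0 -> X = 0.
Proof.
move=> h; apply/eqP; apply/negP => /negP nz.
by have := ip_pos _ nz; rewrite h ltxx.
Qed.


Lemma fe_add (mu nu : 'cV[R]_n) H :
  form_eval (mu + nu) H = form_eval mu H + form_eval nu H.
Proof. by rewrite /form_eval mulmxDr mxE. Qed.

Lemma key (A : 'M[R]_n) (mu nu : 'cV[R]_n) X :
  max_abelian_in_p br theta A ->
  (exists H, (H <= A)%MS /\ form_eval mu H != 0) ->
  (exists Y, Y != 0 /\ root_space br A nu Y) ->
  (exists Z, Z != 0 /\ root_space br A (mu + nu) Z) ->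
  root_space br A mu X -> X != 0 ->
  exists Y, root_space br A nu Y /\ br X Y != 0.
Proof.
move=> [pA abA maxA] [H0 [H0A muH0]] [Y0 [Y0nz Y0r]] [Z0 [Z0nz Z0r]] Xr Xnz.
apply: NNPP => nex.
have hyp : forall Y, root_space br A nu Y -> br X Y = 0.
  move=> Y Yr; apply/eqP; apply/negP => /negP ne; apply: nex; by exists Y.
set tX := theta X.
have tXr : forall H, (H <= A)%MS -> br H tX = - form_eval mu H *: tX.
  move=> H HA; rewrite /tX -{1}(thK H) -thbr (pA H HA) brNl Xr //.
  by rewrite thN thZ scaleNr.
have tXnz : tX != 0.
  by apply: contraNneq Xnz => e; rewrite -(thK X) -/tX e th0.
set h := br X tX.
have hcomm : forall H, (H <= A)%MS -> br H h = 0.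
  move=> H HA; rewrite /h jac (Xr H HA) (tXr H HA) brZl brZr scaleNr.
  by rewrite addrN.
have thh : theta h = - h.
  by rewrite /h thbr /tX thK brC.
have hA : (h <= A)%MS.
  have sAB : (A <= A + h)%MS by exact: addsmxSl.
  have decomp : forall K, (K <= A + h)%MS ->
      exists a c, [/\ (a <= A)%MS & K = a + c *: h].
    move=> K /sub_addsmxP [[u1 u2] /= ->].
    exists (u1 *m A), (u2 0 0); split; first exact: submxMl.
    by rewrite {1}[u2]mx11_scalar mul_scalar_mx.
  have pB : sub_p theta (A + h)%MS.
    move=> K /decomp [a [c [aA ->]]].
    by rewrite thD thZ thh (pA a aA) opprD scalerN.
  have abB : abelian_sub br (A + h)%MS.
    move=> K K' /decomp [a [c [aA ->]]] /decomp [a' [c' [aA' ->]]].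
    rewrite brDl !brDr !brZl !brZr (abA a a') // hcomm // brxx.
    rewrite [br h a']brC hcomm //.
    by rewrite !scaler0 oppr0 !scaler0 !addr0.
  have := maxA _ sAB pB abB.
  by apply: submx_trans; exact: addsmxSr.
have iph : forall H, (H <= A)%MS -> ip h H = - form_eval mu H * ip tX tX.
  move=> H HA; rewrite /h ip_adj -/tX [br tX H]brC tXr // scaleNr (opprK (_ *: tX)).
  by rewrite ipZr mulNr.
have hnz : h != 0.
  apply/eqP => e; move: (iph H0 H0A); rewrite e ip0l => /esym/eqP.
  rewrite mulf_eq0 oppr_eq0 (negbTE muH0) /=.
  by move/eqP/ip_eq0/eqP; rewrite (negbTE tXnz).
have muh : form_eval mu h < 0.
  have := iph h hA; have := ip_pos _ hnz; have := ip_pos _ tXnz => p1 p2 e.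
  rewrite e in p2; nra.
have nuh : form_eval nu h <= 0.
  have e : ip (br tX Y0) (br tX Y0) = - form_eval nu h * ip Y0 Y0.
    rewrite ip_adj /tX thK jac -/tX (hyp Y0 Y0r) br0r addr0 -/h Y0r //.
    by rewrite ipZr mulNr.
  have := ip_ge0 (br tX Y0); have := ip_pos _ Y0nz; rewrite e => p1 p2.
  nra.
have W0 : br tX Z0 = 0.
  have Wr : root_space br A nu (br tX Z0).
    move=> H HA; rewrite jac (tXr H HA) (Z0r H HA) brZl brZr fe_add -scalerDl.
    by rewrite addKr.
  apply: ip_eq0; rewrite {1}ip_adj /tX thK -/tX (hyp _ Wr) ip0r oppr0.
  by [].
have munuh : 0 <= form_eval (mu + nu) h.
  have e : ip (br X Z0) (br X Z0) = form_eval (mu + nu) h * ip Z0 Z0.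
    rewrite ip_adj -/tX jac W0 br0r addr0 [br tX X]brC brNl -/h Z0r //.
    by rewrite ipNr ipZr opprK.
  have := ip_ge0 (br X Z0); have := ip_pos _ Z0nz; rewrite e => p1 p2.
  nra.
move: munuh muh nuh; rewrite fe_add; move: (form_eval mu h) (form_eval nu h) => a b.
move=> p1 p2 p3; have : 0 <= a by rewrite -(addr0 a); apply: le_trans p1 _; rewrite lerD2l.
by rewrite leNgt p2.
Qed.

End Lie.

Theorem lemma4p2 (R : realType) (n : nat)
  (br : 'rV[R]_n -> 'rV[R]_n -> 'rV[R]_n) (theta : 'rV[R]_n -> 'rV[R]_n)
  (A : 'M[R]_n) (mu nu : 'cV[R]_n) :
  is_lie_bracket br -> semisimple br -> cartan_involution br theta ->
  effective br theta -> max_abelian_in_p br theta A ->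
  restricted_root br A mu -> restricted_root br A nu ->
  restricted_root br A (mu + nu) ->
  (forall X, root_space br A mu X -> X != 0 ->
     exists Y, root_space br A nu Y /\ br X Y != 0) /\
  (forall Y, root_space br A nu Y -> Y != 0 ->
     exists X, root_space br A mu X /\ br X Y != 0).
Proof.
move=> Hbr _ Hth _ Hmax [mu1 mu2] [nu1 nu2] [_ [Z [Znz Zr]]].
split.
  move=> X Xr Xnz; apply: (@key _ _ _ _ Hbr Hth _ _ _ _ Hmax mu1) => //; by exists Z.
move=> Y Yr Ynz.
have [X [Xr XY]] : exists X, root_space br A mu X /\ br Y X != 0.
  apply: (@key _ _ _ _ Hbr Hth _ _ _ _ Hmax nu1) => //; exists Z; split => // H HA.
  by rewrite addrC; apply: Zr.
exists X; split => //; rewrite (@brC _ _ _ Hbr X Y) oppr_eq0 //.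
Qed.
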